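(* Let $\mathcal{A}\neq\Phi_\ell$ be a central hyperplane arrangement in $V=\mathbb{K}^\ell$ of rank $r$. Let $\pi=(\pi_1,\ldots,\pi_s)$ be a partition of $\mathcal{A}$, let $H_0\in\pi_1$ and let $(\mathcal{A},\mathcal{A}',\mathcal{A}'')$ be the triple associated with $H_0$. Then any two of the following statements imply the third: (i) $\pi$ is nice for $\mathcal{A}$; (ii) $\pi'$ is nice for $\mathcal{A}'$; (iii) the restriction map $\mathrm{R}:\mathcal{A}\setminus\pi_1\to\mathcal{A}''$ is bijective and $\pi''$ is nice for $\mathcal{A}''$.
   Context: $\mathbb{K}$ is a field; a central arrangement is a finite set of linear hyperplanes in $V$; $\Phi_\ell$ is the empty arrangement; the rank of $\mathcal{A}$ is the codimension of $\bigcap_{H\in\mathcal{A}}H$. $L(\mathcal{A})$ is the set of intersections of subsets of $\mathcal{A}$ ($V$ being the empty intersection); for $X\in L(\mathcal{A})$, $\mathcal{A}_X=\{H\in\mathcal{A}\mid X\subseteq H\}$. For $H_0\in\mathcal{A}$ the triple is $\mathcal{A}'=\mathcal{A}\setminus\{H_0\}$, $\mathcal{A}''=\{H_0\cap H\mid H\in\mathcal{A}'\}$ (an arrangement in $H_0$). A partition $\pi=(\pi_1,\ldots,\pi_s)$ of $\mathcal{A}$ (ordered tuple of non-empty disjoint subsets covering $\mathcal{A}$) is independent if for every choice $H_i\in\pi_i$, $\operatorname{codim}(H_1\cap\cdots\cap H_s)=s$; for $X\in L(\mathcal{A})$ the induced partition $\pi_X$ of $\mathcal{A}_X$ consists of the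 non-empty sets $\pi_i\cap\mathcal{A}_X$. $\pi$ is nice (a factorization) for $\mathcal{A}$ if it is independent and for every $X\in L(\mathcal{A})\setminus\{V\}$ some block of $\pi_X$ is a singleton (the empty partition is nice for an empty arrangement). For $H_0\in\pi_1$: $\pi'$ is the partition of $\mathcal{A}'$ by the non-empty sets $\pi_i\cap\mathcal{A}'$; $\mathrm{R}:\mathcal{A}\setminus\pi_1\to\mathcal{A}''$ is $H\mapsto H\cap H_0$; and $\pi''=(\pi_2'',\ldots,\pi_s'')$ with $\pi_i''=\mathrm{R}(\pi_i)$; ''$\pi''$ is nice for $\mathcal{A}''$'' includes that $\pi''$ is a partition of $\mathcal{A}''$. *)

(* Defs.v *)
From HB Require Import structures.
From mathcomp Require Import all_boot all_algebra.
From mathcomp Require Import finmap.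

Set Implicit Arguments.
Unset Strict Implicit.
Unset Printing Implicit Defensive.

Local Open Scope fset_scope.

(* Linear subspaces of V = K^l are {vspace 'rV[K]_l}.  Arrangements are
   considered relative to an ambient subspace W (W = fullv for V itself,
   W = H0 for the restriction A''). *)
Notation sub K l := {vspace 'rV[K]_l}.

Definition hyperplane_in (K : fieldType) (l : nat) (W H : sub K l) : bool :=
  (H <= W)%VS && ((\dim H).+1 == \dim W).

Definition arrangement (K : fieldType) (l : nat) (W : sub K l)
  (A : {fset sub K l}) : Prop :=
  forall H, H \in A -> hyperplane_in W H.

Definition capW (K : fieldType) (l : nat) (W : sub K l) (B : seq (sub K l)) :=
  \big[capv/W]_(H <- B) H.

Definition codim (K : fieldType) (l : nat) (W X : sub K l) : nat :=
  (\dim W - \dim X)%N.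

Definition inL (K : fieldType) (l : nat) (W : sub K l) (A : {fset sub K l})
  (X : sub K l) : Prop :=
  exists2 B : {fset sub K l}, B `<=` A & X = capW W B.

Definition localA (K : fieldType) (l : nat) (A : {fset sub K l}) (X : sub K l)
  : {fset sub K l} := [fset H in A | (X <= H)%VS].

(* pi = (pi_1, ..., pi_s) as a sequence of blocks; pi_{i+1} = nth fset0 pi i *)
Definition is_partition (K : fieldType) (l : nat) (A : {fset sub K l})
  (pi : seq {fset sub K l}) : Prop :=
  [/\ forall i, (i < size pi)%N -> nth fset0 pi i != fset0,
      forall i j H, (i < size pi)%N -> (j < size pi)%N ->
        H \in nth fset0 pi i -> H \in nth fset0 pi j -> i = j
    & forall H, H \in A <-> exists2 i, (i < size pi)%N & H \in nth fset0 pi i].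

Definition independent (K : fieldType) (l : nat) (W : sub K l)
  (pi : seq {fset sub K l}) : Prop :=
  forall f : nat -> sub K l,
    (forall i, (i < size pi)%N -> f i \in nth fset0 pi i) ->
    codim W (\big[capv/W]_(i < size pi) f i) = size pi.

Definition nice (K : fieldType) (l : nat) (W : sub K l) (A : {fset sub K l})
  (pi : seq {fset sub K l}) : Prop :=
  [/\ is_partition A pi, independent W pi
    & forall X, inL W A X -> X != W ->
        exists2 i, (i < size pi)%N &
          #|` (nth fset0 pi i `&` localA A X)| = 1%N].

Definition deletion (K : fieldType) (l : nat) (A : {fset sub K l}) (H0 : sub K l)
  : {fset sub K l} := A `\ H0.

Definition restriction (K : fieldType) (l : nat) (A : {fset sub K l})
  (H0 : sub K l) : {fset sub K l} :=
  [fset (H :&: H0)%VS | H in A `\ H0].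

Definition pi_del (K : fieldType) (l : nat) (H0 : sub K l)
  (pi : seq {fset sub K l}) : seq {fset sub K l} :=
  [seq B <- [seq B `\ H0 | B <- pi] | B != fset0].

Definition pi_res (K : fieldType) (l : nat) (H0 : sub K l)
  (pi : seq {fset sub K l}) : seq {fset sub K l} :=
  [seq [fset (H :&: H0)%VS | H in B] | B <- behead pi].

Definition R_bijective (K : fieldType) (l : nat) (A : {fset sub K l})
  (H0 : sub K l) (pi : seq {fset sub K l}) : Prop :=
  {in A `\` nth fset0 pi 0 &, injective (fun H => (H :&: H0)%VS)} /\
  (forall Y, Y \in restriction A H0 ->
     exists2 H, H \in A `\` nth fset0 pi 0 & (H :&: H0)%VS = Y).

(* Main.v *)
Require Import Defs.
From HB Require Import structures.
From mathcomp Require Import all_boot all_algebra.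
From mathcomp Require Import finmap.
From mathcomp Require Import zify.
Set Implicit Arguments.
Unset Strict Implicit.
Local Open Scope fset_scope.

Section Gen.
Context {K : fieldType} {l : nat}.
Local Notation S := (sub K l).
Implicit Types (W U X Y Z H : S).

Lemma capW_subP W U (B : seq S) :
  (U <= capW W B)%VS = (U <= W)%VS && all (fun H => U <= H)%VS B.
Proof.
rewrite /capW; elim: B => [|H B IH]; rewrite ?big_nil ?big_cons /= ?andbT //.
by rewrite subv_cap IH; case: (U <= H)%VS; rewrite ?andbF.
Qed.

Lemma bigcap_subP W U (I : Type) (r : seq I) (P : pred I) (F : I -> S) :
  (U <= \big[capv/W]_(i <- r | P i) F i)%VS =
  (U <= W)%VS && all (fun i => P i ==> (U <= F i)%VS) r.
Proof.
elim: r => [|i r IH]; rewrite ?big_nil ?big_cons /= ?andbT //.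
case: (P i) => /=; last by [].
by rewrite subv_cap IH; case: (U <= F i)%VS; rewrite ?andbF.
Qed.

Lemma capW_le W (B : seq S) : (capW W B <= W)%VS.
Proof. by have := subvv (capW W B); rewrite capW_subP => /andP[]. Qed.

Lemma capW_leH W (B : seq S) H : H \in B -> (capW W B <= H)%VS.
Proof.
by move=> HB; have := subvv (capW W B); rewrite capW_subP => /andP[_ /allP]; apply.
Qed.

Lemma capW_ge W (B : seq S) U :
  (U <= W)%VS -> (forall H, H \in B -> (U <= H)%VS) -> (U <= capW W B)%VS.
Proof. by move=> UW UB; rewrite capW_subP UW; apply/allP. Qed.

Lemma bigcap_le W {I : Type} (r : seq I) (P : pred I) (F : I -> S) :
  (\big[capv/W]_(i <- r | P i) F i <= W)%VS.
Proof. by have := subvv (\big[capv/W]_(i <- r | P i) F i); rewrite bigcap_subP => /andP[]. Qed.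

Lemma codim_sub {W Z1 Z2} : (Z1 <= W)%VS -> (Z2 <= W)%VS ->
  codim W (Z1 :&: Z2) <= codim W Z1 + codim W Z2.
Proof.
move=> h1 h2; rewrite /codim.
have := dimv_sum_cap Z1 Z2.
have : \dim (Z1 + Z2) <= \dim W by apply: dimvS; rewrite subv_add h1 h2.
have := dimvS h1; have := dimvS h2.
lia.
Qed.

Lemma codim_mono {W Z1 Z2} : (Z1 <= Z2)%VS -> codim W Z2 <= codim W Z1.
Proof. by move=> h; rewrite /codim; have := dimvS h; lia. Qed.

Lemma bigcap_bound W (I : eqType) (r : seq I) (P : pred I) (F : I -> S) :
  (forall i, i \in r -> P i -> hyperplane_in W (F i)) ->
  codim W (\big[capv/W]_(i <- r | P i) F i) <= count P r.
Proof.
elim: r => [|i r IH] hF; first by rewrite big_nil /codim subnn.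
have IH' : codim W (\big[capv/W]_(i <- r | P i) F i) <= count P r.
  by apply: IH => j jr; apply: hF; rewrite inE jr orbT.
rewrite big_cons /=; case Pi: (P i) => //=.
set b := \big[capv/W]_(j <- r | P j) F j.
have /andP[h1 /eqP h2] := hF i (mem_head _ _) Pi.
have := codim_sub h1 (bigcap_le W r P F).
rewrite /codim in IH' * => hc; rewrite -h2 in hc IH' *.
have e : b = \big[capv/W]_(i <- r | P i) F i by []. rewrite e. apply: (leq_trans hc). by rewrite subSnn leq_add2l.
Qed.

Lemma hyp_eq {W H H'} : hyperplane_in W H -> hyperplane_in W H' ->
  (H <= H')%VS -> H = H'.
Proof.
move=> /andP[_ /eqP e] /andP[_ /eqP e'] s; apply/eqP; rewrite eqEdim s /=.
have : (\dim H).+1 = (\dim H').+1 by rewrite e e'.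
by case=> ->.
Qed.

Lemma hyp_cap_dim W H H' : hyperplane_in W H -> hyperplane_in W H' ->
  H != H' -> (\dim (H :&: H') + 2)%N = \dim W.
Proof.
move=> hH hH' ne; have /andP[s1 /eqP e1] := hH; have /andP[s2 /eqP e2] := hH'.
have sW : (H + H' <= W)%VS by rewrite subv_add s1 s2.
have dle := dimvS sW.
have ndle : \dim H < \dim (H + H').
  rewrite ltnNge; apply/negP => dle2.
  have : (H == H + H')%VS by rewrite eqEdim addvSl dle2.
  move/eqP=> eH; move: ne; rewrite (hyp_eq hH' hH) ?eqxx //.
  by rewrite eH addvSr.
have := dimv_sum_cap H H'; lia.
Qed.

End Gen.

Section Gen2.
Context {K : fieldType} {l : nat}.
Local Notation S := (sub K l).
Implicit Types (W U X Y Z H : S) (A B : {fset S}) (pi : seq {fset S}).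

Lemma card1P (B : {fset S}) :
  #|` B| = 1%N <-> exists x, x \in B /\ forall y, y \in B -> y = x.
Proof.
split.
  move/eqP/cardfs1P=> [x ->]; exists x; split; first by rewrite inE.
  by move=> y; rewrite inE => /eqP.
move=> [x [xB u]]; have -> : B = [fset x]; last by rewrite cardfs1.
apply/fsetP=> y; rewrite inE; apply/idP/eqP; first by move/u.
by move=> ->.
Qed.

Lemma in_loc A X H : (H \in localA A X) = (H \in A) && (X <= H)%VS.
Proof. by rewrite /localA !inE. Qed.

Lemma in_res A H0 Y :
  reflect (exists2 H, (H != H0) && (H \in A) & Y = (H :&: H0)%VS)
          (Y \in restriction A H0).
Proof.
rewrite /restriction; apply: (iffP idP).
  move/imfsetP=> [H hH ->]; exists H => //; move: hH; by rewrite !inE.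
move=> [H hH ->]; apply/imfsetP; exists H => //; by rewrite !inE.
Qed.

Lemma part_in A pi i H : is_partition A pi -> i < size pi ->
  H \in nth fset0 pi i -> H \in A.
Proof. by move=> [_ _ c] ip hH; apply/c; exists i. Qed.

Lemma part_idx A pi H : is_partition A pi -> H \in A ->
  exists2 i, i < size pi & H \in nth fset0 pi i.
Proof. by move=> [_ _ c] /c. Qed.

Lemma part_uniq A pi i j H : is_partition A pi -> i < size pi -> j < size pi ->
  H \in nth fset0 pi i -> H \in nth fset0 pi j -> i = j.
Proof. by move=> [_ d _]; apply: d. Qed.

Definition dflt (B : {fset S}) : S := nth fullv (enum_fset B) 0.

Lemma dflt_in (B : {fset S}) : B != fset0 -> dflt B \in B.
Proof.
move/fset0Pn=> [x xB]; rewrite /dflt.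
have xe : x \in enum_fset B by [].
have h : 0 < size (enum_fset B) by move: xe; case: (enum_fset B).
exact: (mem_nth fullv h).
Qed.

Lemma size_gt0 pi H0 : H0 \in nth fset0 pi 0 -> 0 < size pi.
Proof. by case: pi. Qed.

Lemma inL_loc W A X : inL W A X -> X = capW W (localA A X).
Proof.
move=> [B BA ->]; apply: subv_anti; apply/andP; split.
  apply: capW_ge; first exact: capW_le.
  by move=> H; rewrite in_loc => /andP[].
apply: capW_ge; first exact: capW_le.
move=> H HB; apply: capW_leH; rewrite in_loc (fsubsetP BA) //.
exact: capW_leH.
Qed.

Lemma loc_inL W A X : X = capW W (localA A X) -> inL W A X.
Proof.
move=> e; exists (localA A X) => //; apply/fsubsetP=> H.
by rewrite in_loc => /andP[].
Qed.

Lemma capW_eq W (B1 B2 : {fset S}) : (forall H, (H \in B1) = (H \in B2)) ->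
  capW W B1 = capW W B2.
Proof.
move=> e; apply: subv_anti; apply/andP; split; apply: capW_ge;
  rewrite ?capW_le // => H HB; apply: capW_leH; by rewrite ?e // -e.
Qed.

Lemma res_loc A H0 X : H0 \in A -> (X <= H0)%VS ->
  capW H0 (localA (restriction A H0) X) = capW fullv (localA A X).
Proof.
move=> H0A XH0; apply: subv_anti; apply/andP; split.
  apply: capW_ge; first exact: subvf.
  move=> H; rewrite in_loc => /andP[HA XH].
  have [->|ne] := eqVneq H H0; first exact: capW_le.
  apply: (subv_trans _ (capvSl H H0)); apply: capW_leH.
  rewrite in_loc subv_cap XH XH0 /= andbT; apply/in_res; exists H => //.
  by rewrite ne HA.
apply: capW_ge; first by apply: capW_leH; rewrite in_loc H0A XH0.
move=> Y; rewrite in_loc => /andP[/in_res [H /andP[ne HA] ->]].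
rewrite subv_cap => /andP[XH _]; rewrite subv_cap; apply/andP; split.
  by apply: capW_leH; rewrite in_loc HA XH.
by apply: capW_leH; rewrite in_loc H0A XH0.
Qed.

End Gen2.

Section Gen3.
Context {K : fieldType} {l : nat}.
Local Notation S := (sub K l).
Implicit Types (W U X Y Z H : S) (A B : {fset S}) (pi : seq {fset S}).

Lemma three_block A pi X a b c Ha Hb Hc :
  arrangement fullv A -> is_partition A pi -> independent fullv pi ->
  a < size pi -> b < size pi -> c < size pi -> a != b -> a != c -> b != c ->
  Ha \in nth fset0 pi a -> Hb \in nth fset0 pi b -> Hc \in nth fset0 pi c ->
  (X <= Ha)%VS -> (X <= Hb)%VS -> (X <= Hc)%VS -> codim fullv X <= 2 -> False.
Proof.
move=> hA hp hind ha hb hc nab nac nbc Ia Ib Ic Xa Xb Xc cX.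
set s := size pi in ha hb hc.
pose g i := if i == a then Ha else if i == b then Hb else if i == c then Hc
            else dflt (nth fset0 pi i).
have ga : g a = Ha by rewrite /g eqxx.
have gb : g b = Hb by rewrite /g eq_sym (negbTE nab) eqxx.
have gc : g c = Hc by rewrite /g eq_sym (negbTE nac) eq_sym (negbTE nbc) eqxx.
have hg : forall i, i < s -> g i \in nth fset0 pi i.
  move=> i iS; rewrite /g; case: eqP => [->//|_]; case: eqP => [->//|_].
  case: eqP => [->//|_]; apply: dflt_in; by have [ne _ _] := hp; apply: ne.
have hZ := hind g hg; rewrite -(@big_mkord _ _ _ _ xpredT) in hZ.
set L := [:: a; b; c].
pose P i := (i < s) && (i \notin L).
set big' := \big[capv/fullv]_(i <- index_iota 0 s | P i) g i.
have hT : (X :&: big' <= \big[capv/fullv]_(0 <= i < s) g i)%VS.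
  rewrite bigcap_subP subvf /=; apply/allP => i ir /=.
  have [iL|iL] := boolP (i \in L).
    apply: subv_trans (capvSl _ _) _.
    by move: iL; rewrite /L !inE => /or3P[] /eqP ->; rewrite ?ga ?gb ?gc.
  apply: subv_trans (capvSr _ _) _.
  have := subvv big'; rewrite {2}/big' bigcap_subP => /andP[_ /allP] /(_ i ir).
  by move: ir; rewrite mem_index_iota /P iL andbT => /andP[_ ->].
have c1 := codim_mono (W := fullv) hT.
have c2 := codim_sub (subvf X) (bigcap_le fullv (index_iota 0 s) P g).
have c3 : codim fullv big' <= count P (index_iota 0 s).
  apply: bigcap_bound => i _ /andP[iS _]; apply: hA; exact: part_in hp iS (hg i iS).
have c4 : (count P (index_iota 0 s) + count (mem L) (index_iota 0 s))%N = s.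
  have e : size (index_iota 0 s) = s by rewrite size_iota subn0.
  rewrite addnC -[X in _ = X]e -(count_predC (mem L)).
  congr (_ + _)%N.
  apply: eq_in_count => i; rewrite mem_index_iota /P => /andP[_ ->]; by [].
have c5 : 3 <= count (mem L) (index_iota 0 s).
  rewrite -size_filter; apply: (uniq_leq_size (s1 := L)).
    by rewrite /L /= !inE negb_or nab nac nbc.
  move=> x xL; rewrite mem_filter; apply/andP; split; first by []. rewrite mem_index_iota /=.
  by move: xL; rewrite /L !inE => /or3P[] /eqP ->.
have : s <= (2 + count P (index_iota 0 s))%N.
  rewrite -[X in X <= _]hZ; apply: (leq_trans c1); apply: (leq_trans c2).
  exact: leq_add.
lia.
Qed.

End Gen3.

Section Gen4.
Context {K : fieldType} {l : nat}.
Local Notation S := (sub K l).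
Implicit Types (W U X Y Z H : S) (A B : {fset S}) (pi : seq {fset S}).

Lemma H0_notin A pi H0 k : is_partition A pi -> H0 \in nth fset0 pi 0 ->
  k != 0 -> H0 \notin nth fset0 pi k.
Proof.
move=> hp h0 nk; apply/negP => hk.
have sp := size_gt0 h0.
have [ks|ks] := ltnP k (size pi).
  by move: nk; rewrite (part_uniq hp ks sp hk h0).
by move: hk; rewrite nth_default.
Qed.

Lemma blk_noH0 A pi H0 k : is_partition A pi -> H0 \in nth fset0 pi 0 ->
  k != 0 -> nth fset0 pi k `\ H0 = nth fset0 pi k.
Proof.
move=> hp h0 nk; apply/fsetP => x; rewrite in_fsetD1.
have [->|] := eqVneq x H0 => //=.
by rewrite (negbTE (H0_notin hp h0 nk)).
Qed.

Lemma pi_del_shape A pi H0 : is_partition A pi -> H0 \in nth fset0 pi 0 ->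
  exists2 d, d <= 1 & [/\ (size (pi_del H0 pi) + d)%N = size pi,
     forall j, nth fset0 (pi_del H0 pi) j = nth fset0 pi (j + d) `\ H0
   & d = 1 -> nth fset0 pi 0 `\ H0 = fset0].
Proof.
move=> hp h0.
have hrest : forall k, k != 0 -> nth fset0 pi k `\ H0 = nth fset0 pi k.
  by move=> k; apply: (blk_noH0 hp h0).
have [ne _ _] := hp.
case: pi hp h0 hrest ne => [|B0 rest] // hp h0 hrest ne.
have e1 : [seq B <- [seq B `\ H0 | B <- rest] | B != fset0] = rest.
  have em : [seq B `\ H0 | B <- rest] = rest.
    rewrite -[RHS]map_id; apply/eq_in_map => B /(nthP fset0) [k ks <-].
    exact: (hrest k.+1).
  rewrite em; apply/all_filterP/allP => B /(nthP fset0) [k ks <-].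
  exact: (ne k.+1).
rewrite /pi_del /=.
case: (eqVneq (B0 `\ H0) fset0) => e.
  exists 1 => //; rewrite e /= e1; split; first by rewrite addn1.
    by move=> j; rewrite addn1; symmetry; exact: (hrest j.+1).
  by [].
exists 0 => //; rewrite /= e1; split => //; first by rewrite addn0.
by case=> [|j] //=; rewrite addn0; symmetry; exact: (hrest j.+1).
Qed.

Lemma pi_res_size H0 pi : size (pi_res H0 pi) = (size pi).-1.
Proof. by rewrite /pi_res size_map size_behead. Qed.

Lemma pi_res_nth H0 pi i : i < (size pi).-1 ->
  nth fset0 (pi_res H0 pi) i = [fset (H :&: H0)%VS | H in nth fset0 pi i.+1].
Proof.
by move=> ip; rewrite /pi_res (nth_map fset0) ?size_behead // nth_behead.
Qed.

End Gen4.

Section Gen5.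
Context {K : fieldType} {l : nat}.
Local Notation S := (sub K l).
Implicit Types (W U X Y Z H L M : S) (A B : {fset S}) (pi : seq {fset S}).

Lemma card_loc A B X L : L \in B -> L \in A -> (X <= L)%VS ->
  (forall M, M \in B -> M \in A -> (X <= M)%VS -> M = L) ->
  #|` B `&` localA A X| = 1%N.
Proof.
move=> LB LA XL u; apply/card1P; exists L; split.
  by rewrite in_fsetI in_loc LB LA XL.
by move=> M; rewrite in_fsetI in_loc => /and3P[MB MA XM]; apply: u.
Qed.

Lemma card_loc_inv A B X : #|` B `&` localA A X| = 1%N ->
  exists L, [/\ L \in B, L \in A, (X <= L)%VS &
             forall M, M \in B -> M \in A -> (X <= M)%VS -> M = L].
Proof.
move/card1P=> [L [hL u]]; move: hL; rewrite in_fsetI in_loc => /and3P[LB LA XL].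
exists L; split => // M MB MA XM; apply: u.
by rewrite in_fsetI in_loc MB MA XM.
Qed.

Lemma capE W (I : Type) (r : seq I) (P : pred I) (F : I -> S) :
  \big[capv/W]_(i <- r | P i) (F i :&: W)%VS = (W :&: \big[capv/fullv]_(i <- r | P i) F i)%VS.
Proof.
have key : forall U, (U <= \big[capv/W]_(i <- r | P i) (F i :&: W)%VS)%VS =
                     (U <= W :&: \big[capv/fullv]_(i <- r | P i) F i)%VS.
  move=> U; rewrite bigcap_subP subv_cap bigcap_subP subvf /=.
  case UW: (U <= W)%VS => //=.
  by apply: eq_all => i; rewrite subv_cap UW andbT.
by apply: subv_anti; rewrite key subvv -key subvv.
Qed.

Lemma pairL A H H' : H \in A -> H' \in A -> inL fullv A (H :&: H')%VS.
Proof.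
move=> HA H'A; exists [fset H; H'].
  by apply/fsubsetP => M; rewrite !inE => /orP[] /eqP ->.
apply: subv_anti; apply/andP; split.
  apply: capW_ge; first exact: subvf.
  by move=> M; rewrite !inE => /orP[] /eqP ->; rewrite ?capvSl ?capvSr.
by rewrite subv_cap !capW_leH // !inE eqxx ?orbT.
Qed.

Lemma hyp_ne W H : hyperplane_in W H -> H != W.
Proof.
move=> /andP[_ /eqP e]; apply/negP => /eqP eH; move: e; rewrite eH.
by move/eqP; rewrite -[X in _ == X]addn0 -addn1 eqn_add2l.
Qed.

Lemma bound_ord W n (f : nat -> S) : (forall i, i < n -> hyperplane_in W (f i)) ->
  codim W (\big[capv/W]_(i < n) f i) <= n.
Proof.
move=> hf; rewrite -(@big_mkord _ _ _ _ xpredT).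
have e : count xpredT (index_iota 0 n) = n by rewrite count_predT size_iota subn0.
rewrite -{2}e; apply: bigcap_bound => i; rewrite mem_index_iota => /andP[_ iS] _.
exact: hf.
Qed.

Lemma codim_H0 H0 Z : hyperplane_in fullv H0 -> (Z <= H0)%VS ->
  codim fullv Z = (codim H0 Z).+1.
Proof.
move=> /andP[_ /eqP e] ZH; rewrite /codim -e; have := dimvS ZH; lia.
Qed.

Lemma codim_hyp W H : hyperplane_in W H -> codim W H = 1%N.
Proof. move=> /andP[_ /eqP e]; rewrite /codim -e; lia. Qed.

End Gen5.

Section Main.
Context {K : fieldType} {l : nat}.
Local Notation S := (sub K l).
Context {A : {fset S}}.
Context {pp : seq {fset S}}.
Local Notation pi := pp.
Context {H0 : S}.
Context (hA : arrangement fullv A) (hp : is_partition A pi)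
        (h0 : H0 \in nth fset0 pi 0).
Local Notation B i := (nth fset0 pi i).
Local Notation A' := (deletion A H0).
Local Notation A'' := (restriction A H0).
Local Notation pd := (pi_del H0 pi).
Local Notation pr := (pi_res H0 pi).
Local Notation R C := [fset (H :&: H0)%VS | H in C].
Implicit Types (W U X Y Z H L M : S).

Lemma sp0 : 0 < size pi. Proof. exact: size_gt0 h0. Qed.
Lemma H0A : H0 \in A. Proof. exact: part_in hp sp0 h0. Qed.
Lemma hypH0 : hyperplane_in fullv H0. Proof. exact: hA H0A. Qed.
Lemma H0nf : H0 != fullv. Proof. exact: hyp_ne hypH0. Qed.
Lemma inB k H : k < size pi -> H \in B k -> H \in A.
Proof. exact: part_in hp. Qed.
Lemma neH0 k H : k != 0 -> H \in B k -> H != H0.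
Proof.
move=> nk hk; apply/negP=> /eqP e; rewrite e in hk.
by have := H0_notin hp h0 nk; rewrite hk.
Qed.
Lemma in_del H : (H \in A') = (H != H0) && (H \in A).
Proof. by rewrite /deletion in_fsetD1. Qed.
Lemma notB0 k H : k < size pi -> k != 0 -> H \in B k -> H \notin B 0.
Proof.
move=> ks nk hk; apply/negP => h; move: nk.
by rewrite (part_uniq hp ks sp0 hk h).
Qed.
Lemma in_AB0 H : (H \in A `\` B 0) = (H \notin B 0) && (H \in A).
Proof. by rewrite in_fsetD. Qed.

Lemma L_res X : (X <= H0)%VS -> inL fullv A X -> inL H0 A'' X.
Proof.
move=> XH XL; apply: loc_inL; rewrite (res_loc H0A XH); exact: inL_loc XL.
Qed.

Lemma res_L X : inL H0 A'' X -> (X <= H0)%VS /\ inL fullv A X.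
Proof.
move=> XL; have XH : (X <= H0)%VS by case: XL => C _ ->; exact: capW_le.
split => //; apply: loc_inL; rewrite -(res_loc H0A XH); exact: inL_loc XL.
Qed.

Lemma del_L X : inL fullv A' X -> inL fullv A X.
Proof.
move=> [C CA ->]; exists C => //; apply/fsubsetP => M /(fsubsetP CA).
by rewrite in_del => /andP[].
Qed.

Lemma NICEX X : nice fullv A pi -> inL fullv A X -> X != fullv ->
  exists k L, [/\ k < size pi, L \in B k, L \in A, (X <= L)%VS &
    forall M, M \in B k -> M \in A -> (X <= M)%VS -> M = L].
Proof.
move=> [_ _ n] XL Xn; have [k ks /card_loc_inv [L [LB LA XLe u]]] := n X XL Xn.
by exists k, L.
Qed.

Lemma DELX X : nice fullv A' pd -> inL fullv A' X -> X != fullv ->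
  exists k L, [/\ k < size pi, L \in B k, (L != H0) && (L \in A), (X <= L)%VS &
    forall M, M \in B k -> M != H0 -> M \in A -> (X <= M)%VS -> M = L].
Proof.
move=> [_ _ n] XL Xn; have [j js /card_loc_inv [L [LB LA XLe u]]] := n X XL Xn.
have [d d1 [sz nt _]] := pi_del_shape hp h0.
move: LB LA; rewrite nt in_fsetD1 in_del => /andP[LH LB] /andP[_ LA].
exists (j + d)%N, L; split => //; first lia; first by rewrite LH LA.
move=> M MB MH MA XM; apply: u => //; first by rewrite nt in_fsetD1 MH MB.
by rewrite in_del MH MA.
Qed.

Lemma RESX X : nice H0 A'' pr -> inL H0 A'' X -> X != H0 ->
  exists k Y, [/\ k.+1 < size pi, Y \in R (B k.+1), Y \in A'', (X <= Y)%VS &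
    forall Z, Z \in R (B k.+1) -> Z \in A'' -> (X <= Z)%VS -> Z = Y].
Proof.
move=> [_ _ n] XL Xn; have [k ks /card_loc_inv [Y [YB YA XY u]]] := n X XL Xn.
rewrite pi_res_size in ks; rewrite pi_res_nth // in YB u.
exists k, Y; split => //; lia.
Qed.

Lemma DEL k L X : k < size pi -> L \in B k -> L != H0 -> L \in A -> (X <= L)%VS ->
  (forall M, M \in B k -> M \in A -> (X <= M)%VS -> M = L) ->
  exists2 j, j < size pd & #|` nth fset0 pd j `&` localA A' X| = 1%N.
Proof.
move=> ks LB LH LA XL u.
have [d d1 [sz nt e1]] := pi_del_shape hp h0.
have kd : d <= k.
  rewrite leqNgt; apply/negP => kd.
  have d1' : d = 1 by lia.
  have k0 : k = 0 by lia.
  have e := e1 d1'; rewrite k0 in LB.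
  have : L \in B 0 `\ H0 by rewrite in_fsetD1 LH LB.
  by rewrite e inE.
exists (k - d); first lia.
apply: (card_loc (L := L)); rewrite ?nt ?subnK // ?in_fsetD1 ?in_del ?LH ?LB ?LA //.
move=> M; rewrite in_fsetD1 in_del => /andP[MH MB] /andP[_ MA] XM; exact: u.
Qed.


Lemma shape_kd d k H : d <= 1 -> (d = 1 -> B 0 `\ H0 = fset0) ->
  H \in B k -> H != H0 -> d <= k.
Proof.
move=> d1 e1 Hk HH; rewrite leqNgt; apply/negP => kd.
have d1' : d = 1 by lia.
have k0 : k = 0 by lia.
have e := e1 d1'; rewrite k0 in Hk.
have : H \in B 0 `\ H0 by rewrite in_fsetD1 HH Hk.
by rewrite e inE.
Qed.

Lemma RIinv k Y X : {in A `\` B 0 &, injective (fun H => (H :&: H0)%VS)} ->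
  k.+1 < size pi -> (X <= H0)%VS -> Y \in R (B k.+1) -> (X <= Y)%VS ->
  (forall Z, Z \in R (B k.+1) -> Z \in A'' -> (X <= Z)%VS -> Z = Y) ->
  exists L, [/\ L \in B k.+1, L \in A, (X <= L)%VS &
    forall M, M \in B k.+1 -> M \in A -> (X <= M)%VS -> M = L].
Proof.
move=> inj ks XH /imfsetP [L LB ->] XY u.
have LA := inB ks LB.
exists L; split => //; first exact: subv_trans XY (capvSl _ _).
move=> M MB MA XM.
have e : (M :&: H0)%VS = (L :&: H0)%VS.
  apply: u.
  - by apply/imfsetP; exists M.
  - by apply/in_res; exists M => //; rewrite (neH0 _ MB) // MA.
  - by rewrite subv_cap XM XH.
by apply: inj e; rewrite in_AB0 ?MA ?LA ?(notB0 ks _ MB) ?(notB0 ks _ LB).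
Qed.

Lemma RI k L X : k.+1 < size pi -> (X <= H0)%VS -> L \in B k.+1 -> L \in A ->
  (X <= L)%VS ->
  (forall M, M \in B k.+1 -> M \in A -> (X <= M)%VS -> M = L) ->
  #|` nth fset0 pr k `&` localA A'' X| = 1%N.
Proof.
move=> ks XH LB LA XL u; rewrite pi_res_nth; last lia.
apply: (card_loc (L := (L :&: H0)%VS)).
- by apply/imfsetP; exists L.
- by apply/in_res; exists L => //; rewrite (neH0 _ LB) // LA.
- by rewrite subv_cap XL XH.
move=> Z /imfsetP [M MB ->] _ XM.
have MA := inB ks MB.
by rewrite (u M MB MA (subv_trans XM (capvSl _ _))).
Qed.

Lemma pdel_partition : is_partition A' pd.
Proof.
have [d d1 [sz nt e1]] := pi_del_shape hp h0.
have [ne dj cv] := hp.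
split.
- move=> j js; have : nth fset0 pd j \in pd := mem_nth _ js.
  by rewrite /pi_del mem_filter => /andP[].
- move=> i j H iS jS; rewrite !nt !in_fsetD1 => /andP[_ Hi] /andP[_ Hj].
  have iS' : (i + d)%N < size pi by lia.
  have jS' : (j + d)%N < size pi by lia.
  have := dj _ _ _ iS' jS' Hi Hj; lia.
- move=> H; rewrite in_del; split.
  + move=> /andP[HH HA]; have [k ks Hk] := part_idx hp HA.
    have kd := shape_kd d1 e1 Hk HH.
    exists (k - d); first lia.
    by rewrite nt subnK // in_fsetD1 HH Hk.
  + move=> [j js]; rewrite nt in_fsetD1 => /andP[HH Hk]; rewrite HH /=.
    by apply: inB Hk; lia.
Qed.


Lemma dir1 : nice fullv A' pd -> R_bijective A H0 pi -> nice H0 A'' pr ->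
  nice fullv A pi.
Proof.
move=> hd [inj _] hr; split => //.
- move=> g hg.
  have [d d1 [sz nt e1]] := pi_del_shape hp h0.
  have [g0|g0] := eqVneq (g 0) H0.
  + have [_ indr _] := hr.
    pose f i := (g i.+1 :&: H0)%VS.
    have sn : size pi = (size pr).+1 by rewrite pi_res_size; have := sp0; lia.
    have hf : forall i, i < size pr -> f i \in nth fset0 pr i.
      move=> i iS; rewrite pi_res_nth; last by rewrite -(pi_res_size H0).
      by apply/imfsetP; exists (g i.+1) => //; apply: hg; lia.
    have := indr f hf; rewrite /f capE => hc.
    rewrite sn big_ord_recl /= g0.
    rewrite (eq_bigr (fun i : 'I_(size pr) => g i.+1)); last by move=> i _; rewrite ?lift0.
    by rewrite (codim_H0 hypH0 (capvSl _ _)) hc.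
  + have d0 : d = 0.
      apply/eqP; apply/negP => dn; have d1' : d = 1 by lia.
      have : g 0 \in B 0 `\ H0 by rewrite in_fsetD1 g0 hg // sp0.
      by rewrite e1 // inE.
    have [_ indd _] := hd.
    have hg' : forall i, i < size pd -> g i \in nth fset0 pd i.
      move=> i iS; rewrite nt d0 addn0 in_fsetD1 hg; last lia.
      rewrite andbT; case: (eqVneq i 0) => [->//|ni].
      by apply: (neH0 ni); apply: hg; lia.
    have e : size pd = size pi by lia.
    by move: (indd g hg'); rewrite e.
- move=> X XL Xn.
  have [XH|XH] := boolP (X <= H0)%VS.
  + have [XH0|XH0] := eqVneq X H0.
    * exists 0; first exact: sp0.
      apply: (card_loc (L := H0)); rewrite ?XH0 ?H0A ?subvv //.
      by move=> M MB MA HM; apply/esym; exact: hyp_eq hypH0 (hA MA) HM.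
    * have XLr := L_res XH XL.
      have [k [Y [ks YB YA XY u]]] := RESX hr XLr XH0.
      have [L [LB LA XLe uL]] := RIinv inj ks XH YB XY u.
      by exists k.+1 => //; exact: card_loc LB LA XLe uL.
  + have XL' : inL fullv A' X.
      apply: loc_inL; apply: (etrans (inL_loc XL)); apply: capW_eq => M.
      rewrite !in_loc in_del; case XM: (X <= M)%VS; rewrite ?andbF // !andbT.
      have -> // : M != H0 by apply: contraNneq XH => e; rewrite -e.
    have [k [L [ks LB /andP[LH LA] XLe u]]] := DELX hd XL' Xn.
    exists k => //; apply: (card_loc (L := L)) => // M MB MA XM; apply: u => //.
    by apply: contraNneq XH => e; rewrite -e.
Qed.

Lemma dir2 : nice fullv A pi -> R_bijective A H0 pi -> nice H0 A'' pr ->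
  nice fullv A' pd.
Proof.
move=> hn [inj _] hr; split; first exact: pdel_partition.
- move=> f hf.
  have [d d1 [sz nt e1]] := pi_del_shape hp h0.
  have [_ indp _] := hn.
  case: d d1 sz nt e1 => [|[|//]] _ sz nt e1.
  + have e : size pd = size pi by lia.
    have hf' : forall i, i < size pi -> f i \in B i.
      move=> i iS; have := hf i (ltac:(lia)); rewrite nt addn0 in_fsetD1.
      by move=> /andP[].
    by rewrite e; exact: indp f hf'.
  + set n := size pd.
    have sn : size pi = n.+1 by lia.
    pose g i : S := if i is j.+1 then f j else H0.
    have hg : forall i, i < size pi -> g i \in B i.
      case=> [|j] jS //=; have := hf j (ltac:(lia)); rewrite nt addn1 in_fsetD1.
      by move=> /andP[].
    have := indp g hg; rewrite sn big_ord_recl /=.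
    rewrite (eq_bigr (fun i : 'I_n => f i)); last by move=> i _; rewrite ?lift0.
    move=> hc.
    have c1 := codim_sub (subvf H0) (subvf (\big[capv/fullv]_(i < n) f i)).
    rewrite hc (codim_hyp hypH0) in c1.
    have c2 : codim fullv (\big[capv/fullv]_(i < n) f i) <= n.
      apply: bound_ord => i iS; apply: hA.
      have := hf i iS; rewrite nt in_fsetD1 => /andP[_ Hi]; apply: inB Hi; lia.
    apply/eqP; rewrite eqn_leq c2 /= -(leq_add2l 1) add1n; exact: c1.
- move=> X XL' Xn.
  have XL := del_L XL'.
  have [k0 [L0 [k0s L0B L0A XL0 u0]]] := NICEX hn XL Xn.
  have [e|ne] := eqVneq L0 H0; last exact: DEL k0s L0B ne L0A XL0 u0.
  have XH : (X <= H0)%VS by rewrite -e.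
  have XH0 : X != H0.
    apply/negP => /eqP XE.
    have F : (fullv <= capW fullv (localA A' X))%VS.
      apply: capW_ge; first exact: subvv. move=> M; rewrite in_loc in_del => /andP[/andP[MH MA] XM].
      rewrite XE in XM; have e' := hyp_eq hypH0 (hA MA) XM.
      by move: MH; rewrite -e' eqxx.
    rewrite -(inL_loc XL') XE in F.
    have e2 : H0 = fullv by apply: subv_anti; rewrite subvf F.
    by move: H0nf; rewrite e2 eqxx.
  have XLr := L_res XH XL.
  have [k [Y [ks YB YA XY u]]] := RESX hr XLr XH0.
  have [L [LB LA XLe uL]] := RIinv inj ks XH YB XY u.
  exact: DEL ks LB (neH0 (isT : k.+1 != 0) LB) LA XLe uL.
Qed.


Lemma Xnf_of X : (X <= H0)%VS -> X != fullv.
Proof.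
move=> XH; apply: contraNneq H0nf => XE; apply/eqP; apply: subv_anti.
by rewrite subvf /= -XE.
Qed.

Lemma cap2 H : H \in A -> codim fullv (H :&: H0)%VS <= 2.
Proof.
move=> HA; have := codim_sub (subvf H) (subvf H0).
by rewrite (codim_hyp (hA HA)) (codim_hyp hypH0).
Qed.

Lemma injR : nice fullv A pi -> nice fullv A' pd ->
  {in A `\` B 0 &, injective (fun H => (H :&: H0)%VS)}.
Proof.
move=> hn hd H K'; rewrite !in_AB0 => /andP[HB0 HA] /andP[KB0 KA] /= e.
apply/eqP; apply/negP => /negP ne.
have [_ indp _] := hn.
have HH0 : H != H0 by apply: contraNneq HB0 => ->.
have KH0 : K' != H0 by apply: contraNneq KB0 => ->.
have [i iS Hi] := part_idx hp HA.
have [j jS Kj] := part_idx hp KA.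
have i0 : i != 0 by apply: contraNneq HB0 => e0; move: Hi; rewrite e0.
have j0 : j != 0 by apply: contraNneq KB0 => e0; move: Kj; rewrite e0.
have XH : (H :&: H0 <= H)%VS := capvSl _ _.
have XH0 : (H :&: H0 <= H0)%VS := capvSr _ _.
have XK : (H :&: H0 <= K')%VS by rewrite e capvSl.
have cX := cap2 HA.
have Xnf := Xnf_of XH0.
have i0' : 0 != i by rewrite eq_sym.
have j0' : 0 != j by rewrite eq_sym.
have ij : i = j.
  have [//|nij] := eqVneq i j.
  exfalso; exact: (three_block hA hp indp sp0 iS jS i0' j0' nij h0 Hi Kj XH0 XH XK cX).
subst j.
have [k0 [L0 [k0s L0B L0A XL0 u0]]] := NICEX hn (pairL HA H0A) Xnf.
have u00 : forall M, M \in B 0 -> M \in A -> (H :&: H0 <= M)%VS -> M = H0.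
  have [k00|nk0] := eqVneq k0 0.
    rewrite k00 in L0B u0 => M MB MA XM; rewrite (u0 M MB MA XM).
    by symmetry; exact: u0 H0 h0 H0A XH0.
  have [ki|nki] := eqVneq k0 i.
    rewrite ki in u0; have e1 := u0 H Hi HA XH; have e2 := u0 K' Kj KA XK.
    by move: ne; rewrite e1 e2 eqxx.
  have k0' : 0 != k0 by rewrite eq_sym.
  have ik : i != k0 by rewrite eq_sym.
  exfalso; exact: (three_block hA hp indp sp0 iS k0s i0' k0' ik h0 Hi L0B XH0 XH XL0 cX).
have XL' : inL fullv A' (H :&: H0)%VS.
  have eHK : (H :&: H0)%VS = (H :&: K')%VS.
    apply/eqP; rewrite eqEdim subv_cap XH XK /=.
    have e1 := hyp_cap_dim (hA HA) (hA KA) ne.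
    have e2 := hyp_cap_dim (hA HA) hypH0 HH0.
    by rewrite -(leq_add2r 2) e1 e2.
  by rewrite eHK; apply: pairL; rewrite in_del ?HH0 ?KH0 ?HA ?KA.
have [k [L [ks LB /andP[LH LA] XLe u]]] := DELX hd XL' Xnf.
have [k0'|nk] := eqVneq k 0.
  by rewrite k0' in LB; move: LH; rewrite (u00 L LB LA XLe) eqxx.
have [ki|nki] := eqVneq k i.
  rewrite ki in u; have e1 := u H Hi HH0 HA XH; have e2 := u K' Kj KH0 KA XK.
  by move: ne; rewrite e1 e2 eqxx.
have k' : 0 != k by rewrite eq_sym.
have ik : i != k by rewrite eq_sym.
exfalso; exact: (three_block hA hp indp sp0 iS ks i0' k' ik h0 Hi LB XH0 XH XLe cX).
Qed.

Lemma surjR : nice fullv A pi -> forall Y, Y \in A'' ->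
  exists2 H, H \in A `\` B 0 & (H :&: H0)%VS = Y.
Proof.
move=> hn Y /in_res [H /andP[HH0 HA] ->].
have [HB0|HB0] := boolP (H \in B 0); last by exists H; rewrite // in_AB0 HB0 HA.
have XH0 : (H :&: H0 <= H0)%VS := capvSr _ _.
have [k0 [L0 [k0s L0B L0A XL0 u0]]] := NICEX hn (pairL HA H0A) (Xnf_of XH0).
have [k00|nk0] := eqVneq k0 0.
  rewrite k00 in L0B u0; have e1 := u0 H HB0 HA (capvSl _ _).
  have e2 := u0 H0 h0 H0A XH0.
  by move: HH0; rewrite e1 e2 eqxx.
have L0H0 := neH0 nk0 L0B.
exists L0; first by rewrite in_AB0 L0A (notB0 k0s nk0 L0B).
apply/eqP; rewrite eq_sym eqEdim subv_cap XL0 XH0 /=.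
have e1 := hyp_cap_dim (hA L0A) hypH0 L0H0.
have e2 := hyp_cap_dim (hA HA) hypH0 HH0.
by rewrite -(leq_add2r 2) e1 e2.
Qed.


Lemma res_nice : nice fullv A pi -> nice fullv A' pd -> nice H0 A'' pr.
Proof.
move=> hn hd.
have inj := injR hn hd.
have surj := surjR hn.
have [ne _ _] := hp.
split.
- split.
  + move=> i; rewrite pi_res_size => iS; rewrite pi_res_nth //.
    have /fset0Pn [H HB] := ne i.+1 (ltac:(lia)).
    by apply/fset0Pn; exists (H :&: H0)%VS; apply/imfsetP; exists H.
  + move=> i j Y; rewrite pi_res_size => iS jS; rewrite !pi_res_nth //.
    move=> /imfsetP [H HB ->] /imfsetP [K' KB e].
    have iS' : i.+1 < size pi by lia.
    have jS' : j.+1 < size pi by lia.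
    have HK : H = K'.
      by apply: inj e; rewrite in_AB0 ?(notB0 iS' _ HB) ?(notB0 jS' _ KB)
        ?(inB iS' HB) ?(inB jS' KB).
    subst K'; have := part_uniq hp iS' jS' HB KB; by case.
  + move=> Y; split.
    * move/surj => [H]; rewrite in_AB0 => /andP[HB0 HA] <-.
      have [k ks Hk] := part_idx hp HA.
      have k0 : k != 0 by apply: contraNneq HB0 => e0; move: Hk; rewrite e0.
      exists k.-1; first by rewrite pi_res_size; lia.
      rewrite pi_res_nth; last by lia.
      by rewrite prednK ?lt0n //; apply/imfsetP; exists H.
    * move=> [i]; rewrite pi_res_size => iS; rewrite pi_res_nth //.
      move=> /imfsetP [H HB ->]; apply/in_res; exists H => //.
      by rewrite (neH0 _ HB) // (inB _ HB) //; lia.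
- move=> f hf.
  have [_ indp _] := hn.
  set n := size pr.
  have sn : size pi = n.+1 by rewrite /n pi_res_size; have := sp0; lia.
  have ex : forall i, i < n -> exists2 H, H \in B i.+1 & (H :&: H0)%VS = f i.
    move=> i iS; have := hf i iS; rewrite pi_res_nth; last by rewrite -(pi_res_size H0).
    by move=> /imfsetP [H HB ->]; exists H.
  pose g' i : S := nth H0 [seq H <- enum_fset (B i.+1) | (H :&: H0)%VS == f i] 0.
  have hg' : forall i, i < n -> g' i \in B i.+1 /\ (g' i :&: H0)%VS = f i.
    move=> i iS; have [H HB e] := ex i iS.
    have : g' i \in [seq H <- enum_fset (B i.+1) | (H :&: H0)%VS == f i].
      apply: mem_nth; rewrite size_filter -has_count; apply/hasP; exists H => //.
      by rewrite e eqxx.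
    by rewrite mem_filter => /andP[/eqP e' gB].
  pose g i : S := if i is j.+1 then g' j else H0.
  have hg : forall i, i < size pi -> g i \in B i.
    by case=> [|j] jS //=; apply: (hg' j _).1; lia.
  have := indp g hg; rewrite sn big_ord_recl /=.
  rewrite (eq_bigr (fun i : 'I_n => g' i)); last by move=> i _; rewrite ?lift0.
  have e : \big[capv/H0]_(i < n) f i = (H0 :&: \big[capv/fullv]_(i < n) g' i)%VS.
    rewrite -capE; apply: eq_bigr => i _; by rewrite (hg' i (ltn_ord i)).2.
  by rewrite e (codim_H0 hypH0 (capvSl _ _)) => -[].
- move=> X XLr XH0n.
  have [XH XL] := res_L XLr.
  have [k0 [L0 [k0s L0B L0A XL0 u0]]] := NICEX hn XL (Xnf_of XH).
  have [k00|nk0] := eqVneq k0 0; last first.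
    case: k0 k0s L0B u0 nk0 => [|k] // k0s L0B u0 _.
    exists k; first by rewrite pi_res_size; lia.
    exact: RI k0s XH L0B L0A XL0 u0.
  rewrite k00 in L0B u0.
  have u00 : forall M, M \in B 0 -> M \in A -> (X <= M)%VS -> M = H0.
    move=> M MB MA XM; rewrite (u0 M MB MA XM); exact: esym (u0 H0 h0 H0A XH).
  pose X' := capW fullv (localA A' X).
  have XX' : (X <= X')%VS.
    by apply: capW_ge; [exact: subvf | move=> M; rewrite in_loc => /andP[]].
  have memeq : forall M, (M \in localA A' X') = (M \in localA A' X).
    move=> M; rewrite !in_loc; case MA: (M \in A') => //=; apply/idP/idP.
      by move=> XM; exact: subv_trans XX' XM.
    by move=> XM; apply: capW_leH; rewrite in_loc MA XM.
  have XL' : inL fullv A' X'.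
    by apply: loc_inL; rewrite /X'; apply: capW_eq => M; rewrite memeq.
  have X'nf : X' != fullv.
    apply/negP => /eqP X'f.
    have H0X : (H0 <= X)%VS.
      rewrite (inL_loc XLr); apply: capW_ge; first exact: subvv.
      move=> Y; rewrite in_loc => /andP[/in_res [M /andP[MH MA] ->]].
      rewrite subv_cap => /andP[XM _]; rewrite subv_cap subvv andbT.
      apply: subv_trans (subvf H0) _; rewrite -X'f; apply: capW_leH.
      by rewrite in_loc in_del MH MA XM.
    by move: XH0n; rewrite (subv_anti (introT andP (conj XH H0X))) eqxx.
  have [k [L [ks LB /andP[LH LA] XL'L u]]] := DELX hd XL' X'nf.
  have XLe : (X <= L)%VS := subv_trans XX' XL'L.
  have [k0'|nk] := eqVneq k 0.
    by rewrite k0' in LB; move: LH; rewrite (u00 L LB LA XLe) eqxx.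
  case: k ks LB u nk => [|k] // ks LB u _.
  exists k; first by rewrite pi_res_size; case: (size pi) ks.
  apply: RI ks XH LB LA XLe _ => M MB MA XM; apply: u => //.
    exact: neH0 _ MB.
  by apply: capW_leH; rewrite in_loc in_del (neH0 _ MB) // MA XM.
Qed.

End Main.

Unset Implicit Arguments.
Set Strict Implicit.

Theorem theorem3p5 (K : fieldType) (l : nat) (A : {fset {vspace 'rV[K]_l}})
  (pi : seq {fset {vspace 'rV[K]_l}}) (H0 : {vspace 'rV[K]_l}) :
  arrangement fullv A -> A != fset0 ->
  is_partition A pi -> H0 \in nth fset0 pi 0 ->
  [/\ nice fullv (deletion A H0) (pi_del H0 pi) ->
        (R_bijective A H0 pi /\ nice H0 (restriction A H0) (pi_res H0 pi)) ->
        nice fullv A pi,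
      nice fullv A pi ->
        (R_bijective A H0 pi /\ nice H0 (restriction A H0) (pi_res H0 pi)) ->
        nice fullv (deletion A H0) (pi_del H0 pi)
    & nice fullv A pi -> nice fullv (deletion A H0) (pi_del H0 pi) ->
        (R_bijective A H0 pi /\ nice H0 (restriction A H0) (pi_res H0 pi))].
Proof.
move=> hA _ hp h0; split.
- by move=> hd [hR hr]; exact: dir1 hA hp h0 hd hR hr.
- by move=> hn [hR hr]; exact: dir2 hA hp h0 hn hR hr.
- move=> hn hd; split; last exact: res_nice hA hp h0 hn hd.
  split; first exact: injR hA hp h0 hn hd.
  exact: surjR hA hp h0 hn.
Qed.
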